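(* For every $m\geq 1$, let $(p_m(x),q_m(x))$ be the symmetric decomposition of $x^mP_m(1/x)$. Then $p_m(x)$ and $q_m(x)$ are both unimodal.
   Context: The Boros–Moll polynomial is $P_m(x)=\sum_{i=0}^m d_i(m)x^i$ with $d_i(m)=2^{-2m}\sum_{k=i}^m 2^k\binom{2m-2k}{m-k}\binom{m+k}{k}\binom{k}{i}$. For a polynomial $f$ of degree $n$, its symmetric decomposition is the pair $(a(x),b(x))$ with $a(x)=\frac{f(x)-x^{n+1}f(1/x)}{1-x}$, $b(x)=\frac{x^nf(1/x)-f(x)}{1-x}$, so $f=a+xb$. A polynomial $\sum_{i=0}^n f_ix^i$ is unimodal if $f_0\le f_1\le\cdots\le f_k\ge f_{k+1}\ge\cdots\ge f_n$ for some $k$. *)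

(* Defs.v *)
From mathcomp Require Import all_boot all_order all_algebra.
Set Implicit Arguments. Unset Strict Implicit. Unset Printing Implicit Defensive.
Import Order.TTheory GRing.Theory Num.Theory.
Local Open Scope ring_scope.

Definition bm_coef (m i : nat) : rat :=
  (2%:R ^- (2 * m)) *
  \sum_(i <= k < m.+1)
     (2%:R ^+ k * ('C(2 * m - 2 * k, m - k))%:R * ('C(m + k, k))%:R
      * ('C(k, i))%:R).

Definition boros_moll (m : nat) : {poly rat} := \poly_(i < m.+1) bm_coef m i.

(* x^n f(1/x), for a polynomial f of degree at most n *)
Definition recip (n : nat) (f : {poly rat}) : {poly rat} :=
  \poly_(i < n.+1) f`_(n - i).

Definition sym_a (f : {poly rat}) : {poly rat} :=
  (f - 'X * recip (size f).-1 f) %/ (1 - 'X).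
Definition sym_b (f : {poly rat}) : {poly rat} :=
  (recip (size f).-1 f - f) %/ (1 - 'X).

Definition unimodal (f : {poly rat}) : Prop :=
  exists k : nat, (k <= (size f).-1)%N /\
    (forall i j : nat, (i <= j)%N -> (j <= k)%N -> f`_i <= f`_j) /\
    (forall i j : nat, (k <= i)%N -> (i <= j)%N -> (j <= (size f).-1)%N ->
        f`_j <= f`_i).

(* Main.v *)
Require Import Defs.
From mathcomp Require Import all_boot all_order all_algebra.
From mathcomp Require Import zify ring.
Set Implicit Arguments. Unset Strict Implicit. Unset Printing Implicit Defensive.
Import Order.TTheory GRing.Theory Num.Theory.
Local Open Scope ring_scope.


Lemma bin_half k s t : (s <= t)%N -> (t.*2 <= k)%N -> ('C(k, s) <= 'C(k, t))%N.
Proof.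
elim: t => [|t IH] hst ht.
  by rewrite leqn0 in hst; rewrite (eqP hst).
case: (ltngtP s t.+1) hst => // [hlt|->] _ //.
apply: leq_trans (IH _ _) _; [lia|lia|].
rewrite -(@leq_pmul2l t.+1) // mul_bin_left.
apply: leq_mul => //; lia.
Qed.

Lemma bin_gen k s t : (s <= t)%N -> (s + t <= k)%N -> ('C(k, s) <= 'C(k, t))%N.
Proof.
move=> hst hk; case: (leqP (t.*2) k) => h2.
  exact: bin_half.
have htk : (t <= k)%N by lia.
rewrite -(bin_sub htk); apply: bin_half; lia.
Qed.

Lemma hockey n j : (\sum_(k < n) 'C(k, j))%N = 'C(n, j.+1).
Proof.
elim: n => [|n IH]; first by rewrite big_ord0.
by rewrite big_ord_recr /= IH binS.
Qed.

Definition w (m k : nat) : nat := (2 ^ k * 'C(2 * m - 2 * k, m - k) * 'C(m + k, k))%N.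

Lemma w_gt0 m k : (k <= m)%N -> (0 < w m k)%N.
Proof.
move=> h; rewrite /w !muln_gt0 expn_gt0 /= !bin_gt0; apply/andP; split; lia.
Qed.

Lemma I1 j : (j.+1 * 'C(j.*2.+2, j.+1) = 2 * j.*2.+1 * 'C(j.*2, j))%N.
Proof.
have e1 := mul_bin_diag j.*2.+2 j.
have e2 := mul_bin_diag j.*2.+1 j.
rewrite /= in e1 e2.
have e3 : 'C(j.*2.+1, j.+1) = 'C(j.*2.+1, j).
  have -> : j.+1 = (j.*2.+1 - j)%N by lia.
  by rewrite bin_sub //; lia.
rewrite e3 in e2.
rewrite -e1.
have -> : j.*2.+2 = (2 * j.+1)%N by lia.
nia.
Qed.

Lemma I2 k j : (k.+1 * 'C(k.*2 + j.+2, k.+1) = (k.*2 + j.+2) * 'C(k.*2 + j.+1, k))%N.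
Proof.
have e := mul_bin_diag (k.*2 + j.+2) k.
have h : (k.*2 + j.+2).-1 = (k.*2 + j.+1)%N by lia.
rewrite h in e; by rewrite e.
Qed.

Lemma w_step k j : (w (k + j.+1) k <= w (k + j.+1) k.+1)%N.
Proof.
rewrite /w.
have -> : (2 * (k + j.+1) - 2 * k = j.*2.+2)%N by lia.
have -> : (k + j.+1 - k = j.+1)%N by lia.
have -> : (2 * (k + j.+1) - 2 * k.+1 = j.*2)%N by lia.
have -> : (k + j.+1 - k.+1 = j)%N by lia.
have -> : (k + j.+1 + k = k.*2 + j.+1)%N by lia.
have -> : (k + j.+1 + k.+1 = k.*2 + j.+2)%N by lia.
set X := 'C(j.*2.+2, j.+1). set Y := 'C(k.*2 + j.+1, k).
set Z := 'C(j.*2, j). set W := 'C(k.*2 + j.+2, k.+1). set p := (2 ^ k)%N.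
rewrite expnS -/p.
rewrite -(@leq_pmul2r (j.+1 * k.+1)) //.
have -> : (p * X * Y * (j.+1 * k.+1) = p * Y * k.+1 * (j.+1 * X))%N by ring.
have -> : (2 * p * Z * W * (j.+1 * k.+1) = 2 * p * Z * j.+1 * (k.+1 * W))%N by ring.
rewrite I1 I2 -/Y.
have -> : (p * Y * k.+1 * (2 * j.*2.+1 * Z) = (2 * p * Z * Y) * (j.*2.+1 * k.+1))%N by ring.
have -> : (2 * p * Z * j.+1 * ((k.*2 + j.+2) * Y) = (2 * p * Z * Y) * (j.+1 * (k.*2 + j.+2)))%N by ring.
apply: leq_mul => //; nia.
Qed.

Lemma w_le_m m k : (k <= m)%N -> (w m k <= w m m)%N.
Proof.
move=> h; have [j ->] : exists j, m = (k + j)%N by exists (m - k)%N; lia.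
elim: j k {h} => [|j IH] k; first by rewrite addn0.
apply: leq_trans (w_step k j) _.
by have := IH k.+1; rewrite addSnnS.
Qed.

Definition D m j : rat := \sum_(k < m.+1) ((w m k * 'C(k, j))%:R).

Lemma bmE m j : (j <= m)%N -> bm_coef m j = 2%:R ^- (2 * m) * D m j.
Proof.
move=> hj; rewrite /bm_coef /D; congr (_ * _).
rewrite -(big_mkord xpredT (fun k => ((w m k * 'C(k, j))%:R : rat))).
rewrite [RHS](@big_cat_nat _ _ _ j) /=; [|by []|by apply: leqW].
rewrite [X in _ = X + _]big_nat_cond [X in _ = X + _]big1 ?add0r; last first.
  by move=> k /andP [/andP [_ hk] _]; rewrite bin_small // muln0.
by apply: eq_bigr => k _; rewrite /w !natrM natrX.
Qed.

Lemma s_gt0 m : 0 < (2%:R : rat) ^- (2 * m).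
Proof. by rewrite invr_gt0 exprn_gt0. Qed.

Lemma DB m a b : D m a - D m b =
  \sum_(k < m.+1) (w m k)%:R * (('C(k, a))%:R - ('C(k, b))%:R).
Proof.
by rewrite /D -sumrB; apply: eq_bigr => k _; rewrite !natrM mulrBr.
Qed.

Lemma coreB m i : (2*i <= m)%N -> bm_coef m (m-i) <= bm_coef m i.
Proof.
move=> h; rewrite !bmE ?leq_subr //; last by lia.
rewrite ler_pM2l ?s_gt0 //.
apply: ler_sum => k _; rewrite ler_nat leq_mul //.
have hk : (k <= m)%N by rewrite -ltnS.
case: (ltnP k (m - i)) => hki; first by rewrite bin_small.
rewrite -(bin_sub hki); apply: bin_gen; lia.
Qed.

Lemma coreA m i : (0 < i)%N -> (2*i <= m.+1)%N -> (i <= m)%N ->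
  bm_coef m i.-1 <= bm_coef m (m-i).
Proof.
move=> h0 h1 h2; rewrite !bmE ?leq_subr //; last by lia.
rewrite ler_pM2l ?s_gt0 // -subr_ge0 DB.
set t := fun k : nat => (('C(k, m - i))%:R - ('C(k, i.-1))%:R : rat).
have st : \sum_(k < m.+1) t k = 0.
  rewrite /t sumrB -!natr_sum !hockey.
  have -> : (m - i).+1 = (m.+1 - i)%N by lia.
  rewrite bin_sub; last by lia.
  by rewrite prednK // subrr.
have -> : \sum_(k < m.+1) (w m k)%:R * t k =
    \sum_(k < m.+1) ((w m k)%:R - (w m m)%:R) * t k + (w m m)%:R * \sum_(k < m.+1) t k.
  rewrite mulr_sumr -big_split; apply: eq_bigr => k _ /=.
  by rewrite mulrBl subrK.
rewrite st mulr0 addr0; apply: sumr_ge0 => k _.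
have hk : (k <= m)%N by rewrite -ltnS.
case: (eqVneq (k : nat) m) => [->|hne]; first by rewrite subrr mul0r.
apply: mulr_le0; first by rewrite subr_le0 ler_nat w_le_m.
rewrite /t subr_le0 ler_nat.
case: (ltnP k (m - i)) => hki; first by rewrite bin_small.
rewrite -(bin_sub hki); apply: bin_gen; lia.
Qed.

Lemma D_split m j : D m j = \sum_(k < m) ((w m k * 'C(k, j))%:R) + (w m m * 'C(m, j))%:R.
Proof. by rewrite /D big_ord_recr. Qed.

Lemma bm_pos m j : (j <= m)%N -> 0 < bm_coef m j.
Proof.
move=> h; rewrite bmE // mulr_gt0 ?s_gt0 // D_split.
apply: ltr_wpDl; first by apply: sumr_ge0 => k _; apply: ler0n.
by rewrite ltr0n muln_gt0 w_gt0 // bin_gt0.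
Qed.

Lemma bm_0m m : (0 < m)%N -> bm_coef m m < bm_coef m 0.
Proof.
move=> h; rewrite !bmE // ltr_pM2l ?s_gt0 // !D_split binn bin0 ltrD2r.
rewrite big1; last by move=> k _; rewrite bin_small // muln0.
case: m h => // m _; rewrite big_ord_recl /=.
apply: ltr_wpDr; first by apply: sumr_ge0 => k _; apply: ler0n.
by rewrite ltr0n bin0 muln1 w_gt0.
Qed.

Lemma incr_chain (a : nat -> rat) lo hi :
  (forall j, (lo < j <= hi)%N -> a j.-1 <= a j) ->
  forall i j, (lo <= i)%N -> (i <= j)%N -> (j <= hi)%N -> a i <= a j.
Proof.
move=> H i j hi1; elim: j => [|j IH] hij hj.
  by rewrite leqn0 in hij; rewrite (eqP hij).
case: (ltngtP i j.+1) hij => // [hlt|->] _ //.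
apply: le_trans (IH _ _) (H j.+1 _) => //; lia.
Qed.

Lemma decr_chain (a : nat -> rat) lo hi :
  (forall j, (lo < j <= hi)%N -> a j <= a j.-1) ->
  forall i j, (lo <= i)%N -> (i <= j)%N -> (j <= hi)%N -> a j <= a i.
Proof.
move=> H i j hi1; elim: j => [|j IH] hij hj.
  by rewrite leqn0 in hij; rewrite (eqP hij).
case: (ltngtP i j.+1) hij => // [hlt|->] _ //.
apply: le_trans (H j.+1 _) (IH _ _) => //; lia.
Qed.

Lemma div1X (N : {poly rat}) : N.[1] = 0 -> (N %/ (1 - 'X)) * (1 - 'X) = N.
Proof.
move=> h; apply: divpK.
have -> : (1 - 'X : {poly rat}) = - ('X - 1%:P) by rewrite opprB.
by rewrite dvdpNl dvdp_XsubCl /root h.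
Qed.

Lemma div1X_coef (N : {poly rat}) i : N.[1] = 0 ->
  N`_i = (N %/ (1 - 'X))`_i - (if i == 0%N then 0 else (N %/ (1 - 'X))`_i.-1).
Proof.
move=> h; rewrite -{1}(div1X h) mulrBr mulr1 coefB coefMX //.
Qed.

Lemma size1X : size (1 - 'X : {poly rat}) = 2%N.
Proof.
have -> : (1 - 'X : {poly rat}) = - ('X - 1%:P) by rewrite opprB.
by rewrite size_opp size_XsubC.
Qed.

Lemma div1X_size (N : {poly rat}) : N.[1] = 0 -> N != 0 ->
  size (N %/ (1 - 'X)) = (size N).-1.
Proof.
move=> h nz; have e := div1X h.
have nzA : N %/ (1 - 'X) != 0.
  by apply: contraNneq nz => e0; rewrite -e e0 mul0r.
have nzX : (1 - 'X : {poly rat}) != 0 by rewrite -size_poly_eq0 size1X.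
by rewrite -{2}e size_mul // size1X addn2.
Qed.

Lemma size_exact (p : {poly rat}) n : p`_n != 0 ->
  (forall j, (n < j)%N -> p`_j = 0) -> size p = n.+1.
Proof.
move=> hn hj; apply/eqP; rewrite eqn_leq; apply/andP; split.
  by apply/leq_sizeP => j; apply: hj.
rewrite ltnNge; apply/negP => /leq_sizeP H.
by move: hn; rewrite H.
Qed.

Lemma sum_rev (F : nat -> rat) m :
  \sum_(i < m.+1) F (m - i)%N = \sum_(i < m.+1) F i.
Proof.
rewrite (reindex_inj rev_ord_inj) /=; apply: eq_bigr => i _.
by rewrite subSS subKn // -ltnS.
Qed.

Section Main.
Variable m : nat.
Hypothesis hm : (1 <= m)%N.
Local Notation d := (bm_coef m).
Local Notation P := (boros_moll m).
Local Notation f := (recip m (boros_moll m)).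

Lemma coefP j : P`_j = if (j < m.+1)%N then d j else 0.
Proof. by rewrite coef_poly. Qed.

Lemma coeff j : f`_j = if (j < m.+1)%N then d (m - j) else 0.
Proof.
rewrite coef_poly; case: ifP => // hj.
by rewrite coefP ifT // ltnS leq_subr.
Qed.

Lemma sizef : size f = m.+1.
Proof.
apply: size_poly_eq; rewrite /= subnn coefP /=.
by rewrite gt_eqF // bm_pos.
Qed.

Lemma recipf : recip m f = P.
Proof.
apply/polyP => j; rewrite coef_poly coefP; case: ifP => // hj.
by rewrite coeff ifT ?ltnS ?leq_subr // subKn // -ltnS.
Qed.

Lemma hornerPf : P.[1] = f.[1].
Proof.
rewrite (horner_coef_wide _ (size_poly _ _)) (horner_coef_wide _ (size_poly _ _)).
rewrite -(sum_rev (fun i => P`_i * 1 ^+ i)).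
apply: eq_bigr => i _; rewrite !expr1n !mulr1 coeff coefP.
by rewrite (ltn_ord i) ltnS leq_subr.
Qed.

Lemma half_facts : (m./2 <= m)%N /\ (m./2.*2 <= m <= m./2.*2.+1)%N.
Proof.
have := odd_double_half m; rewrite -!addnn; move: (odd m) (m./2) => b k.
case: b => /= e; lia.
Qed.

Lemma half_facts' : ((m.-1)./2.*2 <= m.-1 <= (m.-1)./2.*2.+1)%N.
Proof.
have := odd_double_half m.-1; rewrite -!addnn; move: (odd m.-1) ((m.-1)./2) => b k.
case: b => /= e; lia.
Qed.

Lemma part_a : unimodal (sym_a f).
Proof.
rewrite /sym_a sizef /= recipf.
set N := f - 'X * P.
have hN1 : N.[1] = 0 by rewrite /N hornerD hornerN hornerM hornerX mul1r hornerPf subrr.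
have cN : forall j, N`_j = (if (j < m.+1)%N then d (m - j) else 0)
   - (if j == 0%N then 0 else if (j.-1 < m.+1)%N then d j.-1 else 0).
  by move=> j; rewrite /N coefB coefXM coeff coefP.
have hNm : N`_m.+1 != 0.
  by rewrite cN ltnn /= ltnSn sub0r oppr_eq0 gt_eqF // bm_pos.
have szN : size N = m.+2.
  apply: (size_exact hNm) => j hj; rewrite cN ifF; last by apply/negbTE; rewrite -leqNgt; lia.
  by rewrite ifF; [rewrite ifF ?subrr //; apply/negbTE; rewrite -leqNgt; lia | apply/negbTE; lia].
have nzN : N != 0 by rewrite -size_poly_eq0 szN.
set A := N %/ (1 - 'X).
have szA : size A = m.+1 by rewrite /A div1X_size // szN.
have inc : forall j, (0 < j <= m)%N -> A`_j - A`_j.-1 = d (m - j) - d j.-1.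
  move=> j /andP [j0 jm]; have := div1X_coef j hN1; rewrite -/A cN.
  have -> : (j == 0%N) = false by lia.
  rewrite ifT; last lia. rewrite ifT; last lia. by move=> ->.
have [h1 /andP [h2 h3]] := half_facts.
exists m./2; rewrite szA /=; split => //; split.
  move=> i0 j0 hij hj; apply: (@incr_chain (fun i => A`_i) 0 m./2) hij hj => //.
  move=> j /andP [j1 jk].
  rewrite -subr_ge0 inc; last by lia.
  rewrite subr_ge0; apply: coreA => //; lia.
move=> i0 j0 hki hij hj; apply: (@decr_chain (fun i => A`_i) m./2 m) hki hij hj.
move=> j /andP [j1 jk].
rewrite -subr_le0 inc; last by lia.
rewrite subr_le0.
have := @coreA m (m.+1 - j); rewrite -[(m.+1 - j).-1]/(m.+1 - j).-1.
have -> : (m.+1 - j).-1 = (m - j)%N by lia.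
have -> : (m - (m.+1 - j))%N = j.-1 by lia.
apply; lia.
Qed.

Lemma part_b : unimodal (sym_b f).
Proof.
rewrite /sym_b sizef /= recipf.
set N := P - f.
have hN1 : N.[1] = 0 by rewrite /N hornerD hornerN hornerPf subrr.
have cN : forall j, N`_j = (if (j < m.+1)%N then d j else 0)
   - (if (j < m.+1)%N then d (m - j) else 0).
  by move=> j; rewrite /N coefB coeff coefP.
have hNm : N`_m != 0.
  by rewrite cN ltnSn subnn subr_eq0 lt_eqF // bm_0m.
have szN : size N = m.+1.
  apply: (size_exact hNm) => j hj.
  have hf : (j < m.+1)%N = false by apply/negbTE; rewrite -leqNgt.
  by rewrite cN hf subrr.
have nzN : N != 0 by rewrite -size_poly_eq0 szN.
set A := N %/ (1 - 'X).
have szA : size A = m by rewrite /A div1X_size // szN.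
have inc : forall j, (0 < j <= m)%N -> A`_j - A`_j.-1 = d j - d (m - j).
  move=> j /andP [j0 jm]; have := div1X_coef j hN1; rewrite -/A cN.
  have -> : (j == 0%N) = false by lia.
  rewrite ifT; last lia. rewrite ifT; last lia. by move=> ->.
have /andP [h2 h3] := half_facts'.
exists (m.-1)./2; rewrite szA; split; first lia; split.
  move=> i0 j0 hij hj; apply: (@incr_chain (fun i => A`_i) 0 (m.-1)./2) hij hj => //.
  move=> j /andP [j1 jk].
  rewrite -subr_ge0 inc; last by lia.
  rewrite subr_ge0; apply: coreB; lia.
move=> i0 j0 hki hij hj; apply: (@decr_chain (fun i => A`_i) (m.-1)./2 m.-1) hki hij hj.
move=> j /andP [j1 jk].
rewrite -subr_le0 inc; last by lia.
rewrite subr_le0.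
have := @coreB m (m - j).
have -> : (m - (m - j))%N = j by lia.
apply; lia.
Qed.

End Main.

Theorem proposition1p4 (m : nat) : (1 <= m)%N ->
  unimodal (sym_a (recip m (boros_moll m))) /\
  unimodal (sym_b (recip m (boros_moll m))).
Proof. by move=> hm; split; [apply: part_a | apply: part_b]. Qed.
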